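(* Let $R$ be a commutative noetherian ring and $A$ a finite $R$-algebra. Let $I,J$ be indecomposable injective $A$-modules with $\mathrm{Hom}_A(I,J)\neq0$ and $\alpha(I)\neq\alpha(J)$. Then $\mathrm{Hom}_A(I,J)$ is not noetherian as a left $\mathrm{End}_A(J)$-module.
   Context: A finite $R$-algebra is a ring $A$ with an injective ring map $R\to Z(A)$ making $A$ a finitely generated $R$-module. For an indecomposable injective $A$-module $I$ there is a unique prime ideal $P$ of $A$ such that $E_A(A/P)$ is a finite direct sum of copies of $I$; $\alpha(I):=P\cap R\in\mathrm{Spec}(R)$. $\mathrm{End}_A(J)$ acts on $\mathrm{Hom}_A(I,J)$ by composition on the left. *)

(* Defs.v *)
From HB Require Import structures.
From mathcomp Require Import all_boot all_order all_algebra.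
Set Implicit Arguments. Unset Strict Implicit. Unset Printing Implicit Defensive.
Import GRing.Theory.
Local Open Scope ring_scope.

Definition is_linear_map (A : nzRingType) (M N : lmodType A) (f : M -> N) : Prop :=
  forall (a : A) (x y : M), f (a *: x + y) = a *: f x + f y.

Definition is_submodule (A : nzRingType) (M : lmodType A) (U : M -> Prop) : Prop :=
  [/\ U 0, (forall x y, U x -> U y -> U (x + y)) & (forall (a : A) x, U x -> U (a *: x))].

Definition is_ideal (A : nzRingType) (P : A -> Prop) : Prop :=
  [/\ P 0, (forall x y, P x -> P y -> P (x + y)),
      (forall a x, P x -> P (a * x)) & (forall a x, P x -> P (x * a))].

Definition is_prime_ideal (A : nzRingType) (P : A -> Prop) : Prop :=
  [/\ is_ideal P, ~ P 1 &
      forall a b : A, (forall r : A, P (a * r * b)) -> P a \/ P b].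

Definition noetherian_ring (R : comNzRingType) : Prop :=
  forall c : nat -> R -> Prop,
    (forall n, is_ideal (c n)) ->
    (forall n x, c n x -> c n.+1 x) ->
    exists N, forall n, (N <= n)%N -> forall x, c n x -> c N x.

Definition finite_algebra (R : comNzRingType) (A : nzRingType)
  (phi : {rmorphism R -> A}) : Prop :=
  [/\ injective phi,
      (forall (r : R) (a : A), phi r * a = a * phi r) &
      exists s : seq A, forall a : A, exists c : seq R,
        a = \sum_(i < size s) phi c`_i * s`_i].

Definition injective_module (A : nzRingType) (E : lmodType A) : Prop :=
  forall (M N : lmodType A) (i : M -> N) (g : M -> E),
    is_linear_map i -> injective i -> is_linear_map g ->
    exists h : N -> E, is_linear_map h /\ forall m, h (i m) = g m.

Definition indecomposable_injective (A : nzRingType) (E : lmodType A) : Prop :=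
  [/\ injective_module E, (exists x : E, x != 0) &
      forall U V : E -> Prop, is_submodule U -> is_submodule V ->
        (forall x, U x -> V x -> x = 0) ->
        (forall z, exists u v, [/\ U u, V v & z = u + v]) ->
        (forall x, U x -> x = 0) \/ (forall x, V x -> x = 0)].

(* E is an injective hull of the left module A/P (P a two-sided ideal):
   E is injective and contains an element x with left annihilator exactly P
   (so that a + P |-> a *: x is an embedding A/P -> E with image A x), and
   the image A x is essential in E. *)
Definition injective_hull_of_quotient (A : nzRingType) (P : A -> Prop)
  (E : lmodType A) : Prop :=
  injective_module E /\
  exists x : E,
    (forall a : A, a *: x = 0 <-> P a) /\
    (forall U : E -> Prop, is_submodule U -> (exists y, U y /\ y <> 0) ->
       exists y, [/\ U y, y <> 0 & exists a : A, y = a *: x]).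

(* E_A(A/P) is (isomorphic to) a finite direct sum I^n of copies of I. *)
Definition hull_is_power (A : nzRingType) (P : A -> Prop) (I : lmodType A) : Prop :=
  exists n : nat, injective_hull_of_quotient P {ffun 'I_n -> I}.

(* Hom_A(I,J) is noetherian as a left End_A(J)-module (End_A(J) acting by
   composition on the left): ACC on End_A(J)-submodules of Hom_A(I,J). *)
Definition is_End_submodule (A : nzRingType) (I J : lmodType A)
  (S : (I -> J) -> Prop) : Prop :=
  [/\ forall f, S f -> is_linear_map f,
      S (fun _ => 0),
      (forall f g, S f -> S g -> S (fun x => f x + g x)) &
      (forall (e : J -> J) f, is_linear_map e -> S f -> S (fun x => e (f x)))].

Definition Hom_noetherian_over_End (A : nzRingType) (I J : lmodType A) : Prop :=
  forall c : nat -> (I -> J) -> Prop,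
    (forall n, is_End_submodule (c n)) ->
    (forall n f, c n f -> c n.+1 f) ->
    exists N, forall n, (N <= n)%N -> forall f, c n f -> c N f.

(* Main.v *)
Require Import Defs.
From HB Require Import structures.
From mathcomp Require Import all_boot all_order all_algebra.
From mathcomp Require Import boolp classical_sets.
Set Implicit Arguments. Unset Strict Implicit. Unset Printing Implicit Defensive.
Import GRing.Theory.
Local Open Scope ring_scope.

Lemma byc (Q : Prop) : (~ Q -> False) -> Q.
Proof. by move=> H; case: (pselect Q) => // /H. Qed.

Lemma zorn_sub (T : Type) (P : (T -> Prop) -> Prop) (X0 : T -> Prop) :
  P X0 ->
  (forall F : (T -> Prop) -> Prop, (forall X, F X -> P X) -> (exists X, F X) ->
     (forall X Y, F X -> F Y -> (forall x, X x -> Y x) \/ (forall x, Y x -> X x)) ->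
     P (fun x => exists X, F X /\ X x)) ->
  exists M, [/\ P M, (forall x, X0 x -> M x) &
     forall Y, P Y -> (forall x, M x -> Y x) -> forall x, Y x -> M x].
Proof.
move=> P0 Pch.
pose T' := {X : T -> Prop | P X /\ (forall x, X0 x -> X x)}.
pose R := fun (a b : T') => `[< forall x, sval a x -> sval b x >].
have t0 : T' by exists X0; split => //.
have [|||t tmax] := @ZL_preorder T' t0 R.
- by move=> a; apply/asboolP.
- by move=> a b c /asboolP ab /asboolP bc; apply/asboolP => x /ab /bc.
- move=> F Ftot.
  have [[a Fa]|nF] := pselect (exists a, F a); last first.
    by exists t0 => s Fs; case: nF; exists s.
  have Pu : P (fun x => exists X, (exists s, F s /\ sval s = X) /\ X x).
    apply: Pch.
    - by move=> X [s [Fs <-]]; case: (svalP s).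
    - by exists (sval a); exists a.
    - move=> X Y [s [Fs <-]] [u [Fu <-]].
      by case: (Ftot s u Fs Fu) => /asboolP H; [left|right].
  have X0u : forall x, X0 x -> exists X, (exists s, F s /\ sval s = X) /\ X x.
    by move=> x X0x; exists (sval a); split; [exists a|case: (svalP a) => _; apply].
  exists (exist (fun X => P X /\ (forall x, X0 x -> X x)) _ (conj Pu X0u)) => s Fs; apply/asboolP => x sx /=.
  by exists (sval s); split => //; exists s.
- case: t tmax => M [PM X0M] tmax; exists M; split => // Y PY MY.
  have X0Y : forall x, X0 x -> Y x by move=> x /X0M /MY.
  have := tmax (exist (fun X => P X /\ (forall x, X0 x -> X x)) Y (conj PY X0Y)).
  by move=> H; move/asboolP: (H (introT (asboolP _) MY)).
Qed.

Section Lin.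
Variables (A : nzRingType) (M N : lmodType A) (f : M -> N) (hf : is_linear_map f).
Lemma linD x y : f (x + y) = f x + f y.
Proof. by rewrite -[x in LHS]scale1r hf scale1r. Qed.
Lemma lin0 : f 0 = 0.
Proof. by have := linD 0 0; rewrite addr0 -{1}[f 0]addr0 => /addrI. Qed.
Lemma linZ a x : f (a *: x) = a *: f x.
Proof. by rewrite -[a *: x]addr0 hf lin0 addr0. Qed.
Lemma linN x : f (- x) = - f x.
Proof. by rewrite -scaleN1r linZ scaleN1r. Qed.
Lemma linB x y : f (x - y) = f x - f y.
Proof. by rewrite linD linN. Qed.
End Lin.

Lemma max_compl (A : nzRingType) (J : lmodType A) (W X0 : J -> Prop) :
  is_submodule X0 -> (forall x, X0 x -> W x -> x = 0) ->
  exists M, [/\ is_submodule M, (forall x, M x -> W x -> x = 0), (forall x, X0 x -> M x) &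
    forall Y, is_submodule Y -> (forall x, Y x -> W x -> x = 0) ->
      (forall x, M x -> Y x) -> forall x, Y x -> M x].
Proof.
move=> HX0 X0W.
have ch : forall F : (J -> Prop) -> Prop,
   (forall X, F X -> is_submodule X /\ forall x, X x -> W x -> x = 0) -> (exists X, F X) ->
     (forall X Y, F X -> F Y -> (forall x, X x -> Y x) \/ (forall x, Y x -> X x)) ->
   is_submodule (fun x => exists X, F X /\ X x) /\
   forall x, (exists X, F X /\ X x) -> W x -> x = 0.
  move=> F FP [X FX] Ftot; split; first split.
  - by exists X; split => //; case: (FP X FX) => [[]].
  - move=> x y [X1 [F1 X1x]] [Y1 [F2 Y1y]].
    case: (Ftot _ _ F1 F2) => sub.
    + exists Y1; split => //; case: (FP _ F2) => [[_ D _] _]; apply: D => //; exact: sub.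
    + exists X1; split => //; case: (FP _ F1) => [[_ D _] _]; apply: D => //; exact: sub.
  - move=> a x [X1 [F1 X1x]]; exists X1; split=> //.
    by case: (FP _ F1) => [[_ _ Z] _]; exact: Z.
  - by move=> x [X1 [F1 X1x]]; case: (FP _ F1) => _; apply.
have [M [[HM MW] X0M Mmax]] :=
  @zorn_sub J (fun X => is_submodule X /\ forall x, X x -> W x -> x = 0) X0 (conj HX0 X0W) ch.
by exists M; split => // Y HY YW; apply: Mmax.
Qed.
Section SubMod.
Variables (A : nzRingType) (V : lmodType A) (S : V -> Prop) (HS : is_submodule S).
Definition spred of is_submodule S : {pred V} := fun x => `[< S x >].
Record subm := Subm { subm_val : V; _ : spred HS subm_val }.
HB.instance Definition _ := [isSub for subm_val].
HB.instance Definition _ := [Choice of subm by <:].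
Lemma spred_closed : subsemimod_closed (spred HS).
Proof.
case: HS => S0 SD SZ; split; first split.
- by apply/asboolP.
- by move=> x y /asboolP Sx /asboolP Sy; apply/asboolP; apply: SD.
- by move=> a x /asboolP Sx; apply/asboolP; apply: SZ.
Qed.
HB.instance Definition _ := GRing.isSubmodClosed.Build A V (spred HS) spred_closed.
HB.instance Definition _ := [SubChoice_isSubLmodule of subm by <:].
Lemma subm_valZ (a : A) (x : subm) : subm_val (a *: x) = a *: subm_val x.
Proof. by []. Qed.
Lemma subm_valD (x y : subm) : subm_val (x + y) = subm_val x + subm_val y.
Proof. by []. Qed.
Lemma subm_valP (x : subm) : S (subm_val x).
Proof. by case: x => v Hv; apply/asboolP. Qed.
End SubMod.

Lemma uniform (A : nzRingType) (J : lmodType A) : indecomposable_injective J ->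
  forall U V : J -> Prop, is_submodule U -> is_submodule V ->
  (exists u, U u /\ u <> 0) -> (exists v, V v /\ v <> 0) ->
  exists w, [/\ U w, V w & w <> 0].
Proof.
move=> [Jinj _ Jind] U V HU HV [u [Uu u0]] [v [Vv v0]].
apply: byc => nUV.
have UV0 : forall x, U x -> V x -> x = 0.
  by move=> x Ux Vx; apply: byc => x0; apply: nUV; exists x.
have [C [HC CV UC Cmax]] := max_compl HU UV0.
have [D [HD DC VD Dmax]] := @max_compl _ _ C V HV (fun x Vx Cx => CV x Cx Vx).
have HC' := HC; have HD' := HD.
case: HC' => C0 CD CZ; case: HD' => D0 DD DZ.
pose i := fun p : (subm HC * subm HD)%type => subm_val p.1 + subm_val p.2.
pose g := fun p : (subm HC * subm HD)%type => subm_val p.1.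
have il : is_linear_map i.
  move=> a p q; rewrite /i /= scalerDr -!addrA; congr (_ + _).
  by rewrite addrCA.
have ii : injective i.
  move=> [p1 p2] [q1 q2]; rewrite /i /= => E.
  have e1 : subm_val p1 - subm_val q1 = subm_val q2 - subm_val p2.
    by apply/eqP; rewrite subr_eq -addrA (addrC (- _)) addrA (addrC (subm_val q2)) -E addrK.
  have z1 : subm_val p1 - subm_val q1 = 0.
    apply: DC; last by apply: CD; [apply: subm_valP|rewrite -scaleN1r; apply: CZ; apply: subm_valP].
    by rewrite e1; apply: DD; [apply: subm_valP|rewrite -scaleN1r; apply: DZ; apply: subm_valP].
  have z2 : subm_val q2 - subm_val p2 = 0 by rewrite -e1.
  move/eqP: z1; rewrite subr_eq0 => /eqP/val_inj ->.
  by move/eqP: z2; rewrite subr_eq0 => /eqP/val_inj ->.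
have gl : is_linear_map g by [].
have [h [hl hi]] := Jinj _ _ i g il ii gl.
have hC : forall c, C c -> h c = c.
  move=> c Cc; have Pc : spred HC c by apply/asboolP.
  have Pz : spred HD 0 by apply/asboolP.
  by have := hi (Subm Pc, Subm Pz); rewrite /i /g /= addr0.
have hD : forall d, D d -> h d = 0.
  move=> d Dd; have Pd : spred HD d by apply/asboolP.
  have Pz : spred HC 0 by apply/asboolP.
  by have := hi (Subm Pz, Subm Pd); rewrite /i /g /= add0r.
have hCy : forall y, C (h y).
  pose Y := fun z => exists y, z = h y.
  have HY : is_submodule Y.
    split; first by exists 0; rewrite (lin0 hl).
    - by move=> _ _ [y1 ->] [y2 ->]; exists (y1 + y2); rewrite (linD hl).
    - by move=> a _ [y ->]; exists (a *: y); rewrite (linZ hl).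
  have YV : forall x, Y x -> V x -> x = 0.
    move=> _ [y ->] Vz; apply: byc => z0.
    pose D' := fun w => exists d a, D d /\ w = d + a *: y.
    have HD' : is_submodule D'.
      split; first by exists 0, 0; rewrite scale0r addr0.
      - move=> _ _ [d1 [a1 [D1 ->]]] [d2 [a2 [D2 ->]]]; exists (d1 + d2), (a1 + a2).
        by split; [apply: DD|rewrite scalerDl addrACA].
      - move=> b _ [d [a [Dd ->]]]; exists (b *: d), (b * a).
        by split; [apply: DZ|rewrite scalerDr scalerA].
    have DD' : forall x, D x -> D' x by move=> x Dx; exists x, 0; rewrite scale0r addr0.
    have [w [D'w Cw w0]] : exists w, [/\ D' w, C w & w <> 0].
      apply: byc => nw.
      have D'C : forall x, D' x -> C x -> x = 0.
        by move=> x D'x Cx; apply: byc => x0; apply: nw; exists x.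
      have Dy : D y.
        by apply: (Dmax D' HD' D'C DD'); exists 0, 1; rewrite scale1r add0r.
      by apply: z0; rewrite hD.
    case: D'w => d [a [Dd Ew]].
    have Ew' : w = a *: h y.
      by rewrite -{1}(hC w Cw) Ew (linD hl) (linZ hl) hD // add0r.
    apply: w0; apply: CV => //; rewrite Ew'.
    by case: HV => _ _; apply.
  have CY : forall x, C x -> Y x by move=> x Cx; exists x; rewrite hC.
  by move=> y; apply: (Cmax Y HY YV CY); exists y.
have hh : forall y, h (h y) = h y by move=> y; rewrite hC.
pose K := fun z => h z = 0.
have HK : is_submodule K.
  split; first exact: lin0 hl.
  - by move=> x y; rewrite /K (linD hl) => -> ->; rewrite addr0.
  - by move=> a x; rewrite /K (linZ hl) => ->; rewrite scaler0.
have KD : forall x, K x -> D x.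
  apply: (Dmax K HK) => [x Kx Cx|x Dx]; last exact: hD.
  by rewrite -(hC x Cx).
have := Jind C D HC HD (fun x Cx Dx => DC x Dx Cx).
case.
- move=> z; exists (h z), (z - h z); split => //; last by rewrite addrC subrK.
  by apply: KD; rewrite /K (linB hl) hh subrr.
- by move=> /(_ u (UC u Uu)).
- by move=> /(_ v (VD v Vv)).
Qed.

Section Noeth.
Variables (R : comNzRingType) (A : nzRingType) (phi : {rmorphism R -> A}) (s : seq A).

Fixpoint Mk (k : nat) : A -> Prop :=
  match k with
  | 0 => fun a => a = 0
  | k.+1 => fun a => exists r w, Mk k w /\ a = phi r * s`_k + w
  end.

Definition Rsub (L : A -> Prop) :=
  [/\ L 0, forall x y, L x -> L y -> L (x + y) & forall r x, L x -> L (phi r * x)].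

Lemma Rsub_opp L : Rsub L -> forall x, L x -> L (- x).
Proof. by case=> _ _ LZ x Lx; rewrite -mulN1r -(rmorphN1 phi); apply: LZ. Qed.

Lemma Mk_sub k : Rsub (Mk k).
Proof.
elim: k => [|k [M0 MD MZ]] /=.
  by split => [//|x y -> ->|r x ->]; rewrite ?addr0 ?mulr0.
split.
- by exists 0, 0; rewrite rmorph0 mul0r addr0.
- move=> _ _ [r1 [w1 [M1 ->]]] [r2 [w2 [M2 ->]]]; exists (r1 + r2), (w1 + w2).
  by split; [apply: MD|rewrite rmorphD mulrDl addrACA].
- move=> r _ [r1 [w1 [M1 ->]]]; exists (r * r1), (phi r * w1).
  by split; [apply: MZ|rewrite mulrDr rmorphM mulrA].
Qed.

Lemma Mk_sum k (c : seq R) : Mk k (\sum_(i < k) phi c`_i * s`_i).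
Proof.
elim: k => [|k IH]; first by rewrite big_ord0.
by rewrite big_ord_recr /=; exists c`_k, (\sum_(i < k) phi c`_i * s`_i); rewrite addrC.
Qed.

Lemma chain_mono (T : Type) (L : nat -> T -> Prop) :
  (forall n x, L n x -> L n.+1 x) -> forall n m, (n <= m)%N -> forall x, L n x -> L m x.
Proof.
move=> H n m /subnKC <-; elim: (m - n)%N => [|d IH] x Lx; first by rewrite addn0.
by rewrite addnS; apply: H; apply: IH.
Qed.

Lemma Mk_noeth : noetherian_ring R -> forall k (L : nat -> A -> Prop),
  (forall m, Rsub (L m)) -> (forall m x, L m x -> Mk k x) ->
  (forall m x, L m x -> L m.+1 x) ->
  exists N, forall m, (N <= m)%N -> forall x, L m x -> L N x.
Proof.
move=> Rn; elim=> [|k IH] L LR LM Lasc.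
  by exists 0%N => m _ x /LM /= ->; case: (LR 0%N).
pose c := fun m (r : R) => exists w, Mk k w /\ L m (phi r * s`_k + w).
have cI : forall m, is_ideal (c m).
  move=> m; case: (LR m) => L0 LD LZ; case: (Mk_sub k) => M0 MD MZ; split.
  - by exists 0; rewrite rmorph0 mul0r addr0.
  - move=> x y [w1 [M1 L1]] [w2 [M2 L2]]; exists (w1 + w2); split; first exact: MD.
    by rewrite rmorphD mulrDl addrACA; apply: LD.
  - move=> a x [w [Mw Lw]]; exists (phi a * w); split; first exact: MZ.
    by rewrite rmorphM -mulrA -mulrDr; apply: LZ.
  - move=> a x [w [Mw Lw]]; exists (phi a * w); split; first exact: MZ.
    by rewrite mulrC rmorphM -mulrA -mulrDr; apply: LZ.
have casc : forall m x, c m x -> c m.+1 x.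
  by move=> m x [w [Mw Lw]]; exists w; split => //; apply: Lasc.
have [N1 HN1] := Rn c cI casc.
pose L' := fun m a => Mk k a /\ L m a.
have L'R : forall m, Rsub (L' m).
  move=> m; case: (LR m) => L0 LD LZ; case: (Mk_sub k) => M0 MD MZ; split.
  - by split.
  - by move=> x y [? ?] [? ?]; split; [apply: MD|apply: LD].
  - by move=> r x [? ?]; split; [apply: MZ|apply: LZ].
have [N2 HN2] := IH L' L'R (fun m x (H : L' m x) => proj1 H) (fun m x (H : L' m x) => conj (proj1 H) (Lasc m x (proj2 H))).
exists (maxn N1 N2) => m Hm x Lx.
have mono := chain_mono Lasc.
have [r [w [Mw Ex]]] := LM m x Lx.
have cm : c m r by exists w; rewrite -Ex.
have [w' [Mw' Lw']] := HN1 m (leq_trans (leq_maxl _ _) Hm) r cm.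
have L'd : L' m (w - w').
  split; first by case: (Mk_sub k) => _ MD _; apply: MD => //; apply: Rsub_opp => //; exact: Mk_sub.
  have -> : w - w' = x - (phi r * s`_k + w') by rewrite Ex opprD addrACA subrr add0r.
  case: (LR m) => _ LD _; apply: LD => //; apply: Rsub_opp => //.
  by apply: (mono N1) => //; apply: leq_trans Hm; apply: leq_maxl.
have [_ Ld] := HN2 m (leq_trans (leq_maxr _ _) Hm) _ L'd.
have -> : x = (phi r * s`_k + w') + (w - w') by rewrite addrACA subrr addr0 Ex.
case: (LR (maxn N1 N2)) => _ LD _; apply: LD.
  by apply: (mono N1) => //; apply: leq_maxl.
by apply: (mono N2) => //; apply: leq_maxr.
Qed.
End Noeth.

Lemma A_noeth (R : comNzRingType) (A : nzRingType) (phi : {rmorphism R -> A}) :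
  noetherian_ring R -> finite_algebra phi -> forall L : nat -> A -> Prop,
  (forall m, Rsub phi (L m)) -> (forall m x, L m x -> L m.+1 x) ->
  exists N, forall m, (N <= m)%N -> forall x, L m x -> L N x.
Proof.
move=> Rn [_ _ [s Hs]] L LR Lasc.
apply: (@Mk_noeth R A phi s Rn (size s) L LR) => // m x _.
by have [c ->] := Hs x; apply: Mk_sum.
Qed.
Lemma ffZ (A : nzRingType) (I : lmodType A) n (a : A) (f : {ffun 'I_n -> I}) i : (a *: f) i = a *: f i.
Proof. by rewrite ffunE. Qed.
Lemma ff0 (A : nzRingType) (I : lmodType A) n i : (0 : {ffun 'I_n -> I}) i = 0.
Proof. by rewrite ffunE. Qed.

Lemma lin_comp (A : nzRingType) (M N O : lmodType A) (f : M -> N) (g : N -> O) :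
  is_linear_map f -> is_linear_map g -> is_linear_map (fun x => g (f x)).
Proof. by move=> hf hg a x y; rewrite hf hg. Qed.
Lemma lin_add (A : nzRingType) (M N : lmodType A) (f g : M -> N) :
  is_linear_map f -> is_linear_map g -> is_linear_map (fun x => f x + g x).
Proof. by move=> hf hg a x y; rewrite hf hg scalerDr addrACA. Qed.
Lemma lin_zero (A : nzRingType) (M N : lmodType A) : is_linear_map (fun _ : M => (0 : N)).
Proof. by move=> a x y; rewrite scaler0 addr0. Qed.
Lemma lin_id (A : nzRingType) (M : lmodType A) : is_linear_map (fun x : M => x).
Proof. by []. Qed.
Lemma lin_iter (A : nzRingType) (M : lmodType A) (h : M -> M) n :
  is_linear_map h -> is_linear_map (iter n h).
Proof. by move=> hh; elim: n => [|n IH] // a x y; rewrite !iterS IH hh. Qed.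

Section Mods.
Variables (R : comNzRingType) (A : nzRingType) (phi : {rmorphism R -> A}).
Hypothesis fa : finite_algebra phi.

Lemma central r a : phi r * a = a * phi r.
Proof. by case: fa => _ H _. Qed.

Lemma scZ (M : lmodType A) r a (x : M) : phi r *: (a *: x) = a *: (phi r *: x).
Proof. by rewrite !scalerA central. Qed.

Lemma sc_lin (M : lmodType A) r : is_linear_map (fun z : M => phi r *: z).
Proof. by move=> a x y; rewrite scalerDr scZ. Qed.

Lemma hull_inj P (I : lmodType A) : is_prime_ideal P -> hull_is_power P I ->
  forall r, ~ P (phi r) -> forall y : I, phi r *: y = 0 -> y = 0.
Proof.
move=> [[P0 PD PL PR] P1 Pprime] [n [Einj [x [annx ess]]]] r nPr y ry.
apply: byc => y0.
case: n => [|n] in Einj x annx ess *.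
  apply: P1; apply/annx; rewrite scale1r; apply/ffunP => [[]] //.
pose Y : {ffun 'I_n.+1 -> I} := [ffun _ => y].
pose K := fun z : {ffun 'I_n.+1 -> I} => phi r *: z = 0.
have HK : is_submodule K.
  split; first by rewrite /K scaler0.
  - by move=> u v; rewrite /K scalerDr => -> ->; rewrite addr0.
  - by move=> a u; rewrite /K scZ => ->; rewrite scaler0.
have KY : K Y by apply/ffunP => i; rewrite ffZ ffunE ry ff0.
have Y0 : Y <> 0 by move=> /ffunP /(_ ord0); rewrite ffunE ff0.
have [z [Kz z0 [a Ez]]] := ess K HK (ex_intro _ Y (conj KY Y0)).
have : P (phi r * a).
  by apply/annx; rewrite -scalerA -Ez.
move=> Pra; case: (Pprime (phi r) a).
- by move=> t; rewrite central -mulrA; apply: PL.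
- by [].
- by move=> /annx; rewrite -Ez.
Qed.

Lemma hull_tors P (I : lmodType A) : is_prime_ideal P -> hull_is_power P I ->
  forall r, P (phi r) -> exists y : I, y <> 0 /\ phi r *: y = 0.
Proof.
move=> [_ P1 _] [n [_ [x [annx _]]]] r Pr.
have x0 : phi r *: x = 0 by apply/annx.
have xn0 : x <> 0 by move=> x0'; apply: P1; apply/annx; rewrite x0' scaler0.
have [i xi] : exists i, x i <> 0.
  apply: byc => H; apply: xn0; apply/ffunP => i; rewrite ff0.
  by apply: byc => ?; apply: H; exists i.
by exists (x i); split => //; rewrite -ffZ x0 ff0.
Qed.

Lemma bij (I : lmodType A) : indecomposable_injective I -> forall r,
  (forall y : I, phi r *: y = 0 -> y = 0) ->
  exists h : I -> I, [/\ is_linear_map h, forall y, h (phi r *: y) = y &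
                        forall y, phi r *: h y = y].
Proof.
move=> [Iinj [x0 x0n] Iind] r rinj.
pose s := fun z : I => phi r *: z.
have sl : is_linear_map s by apply: sc_lin.
have si : injective s.
  move=> a b E; apply/eqP; rewrite -subr_eq0; apply/eqP/rinj.
  by rewrite scalerBr; apply/eqP; rewrite subr_eq0; apply/eqP.
have [h [hl hs]] := Iinj I I s id sl si (@lin_id _ I).
exists h; split => //.
pose U := fun z => s (h z) = z.
pose V := fun z => h z = 0.
have HU : is_submodule U.
  split; first by rewrite /U (lin0 hl) (lin0 sl).
  - by move=> u v; rewrite /U (linD hl) (linD sl) => -> ->.
  - by move=> a u; rewrite /U (linZ hl) (linZ sl) => ->.
have HV : is_submodule V.
  split; first by rewrite /V (lin0 hl).
  - by move=> u v; rewrite /V (linD hl) => -> ->; rewrite addr0.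
  - by move=> a u; rewrite /V (linZ hl) => ->; rewrite scaler0.
case: (Iind U V HU HV).
- by move=> z Uz Vz; rewrite -Uz Vz (lin0 sl).
- move=> z; exists (s (h z)), (z - s (h z)); split.
  + by rewrite /U hs.
  + by rewrite /V (linB hl) hs subrr.
  + by rewrite addrC subrK.
- move=> U0; have : U (s x0) by rewrite /U hs.
  by move=> /U0 /rinj E; move: x0n; rewrite E eqxx.
- move=> V0 y; apply/eqP; rewrite -subr_eq0; apply/eqP; apply: V0.
  by rewrite /V (linB hl) hs subrr.
Qed.
End Mods.

Lemma loc_nil (R : comNzRingType) (A : nzRingType) (phi : {rmorphism R -> A}) (I : lmodType A) :
  noetherian_ring R -> finite_algebra phi -> indecomposable_injective I -> forall r,
  (exists y0 : I, y0 <> 0 /\ phi r *: y0 = 0) -> forall y : I, exists N, phi r ^+ N *: y = 0.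
Proof.
move=> Rn fa Iii r [y0 [y0n ry0]] y.
have cen : forall n a, phi r ^+ n * a = a * phi r ^+ n.
  by move=> n a; rewrite -rmorphXn (central fa).
pose L := fun m (a : A) => (phi r ^+ m * a) *: y = 0.
have LR : forall m, Rsub phi (L m).
  move=> m; split.
  - by rewrite /L mulr0 scale0r.
  - by move=> a b; rewrite /L mulrDr scalerDl => -> ->; rewrite addr0.
  - by move=> t a La; rewrite /L mulrA cen -mulrA -scalerA La scaler0.
have Lasc : forall m a, L m a -> L m.+1 a.
  by move=> m a La; rewrite /L exprS -mulrA -scalerA La scaler0.
have [N HN] := A_noeth Rn fa LR Lasc.
exists N; apply: byc => yN.
pose X := fun z => exists a, z = (phi r ^+ N * a) *: y.
pose Y := fun z : I => phi r *: z = 0.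
have HX : is_submodule X.
  split; first by exists 0; rewrite mulr0 scale0r.
  - by move=> _ _ [a ->] [b ->]; exists (a + b); rewrite mulrDr scalerDl.
  - move=> b _ [a ->]; exists (b * a); rewrite scalerA mulrA -cen mulrA //.
have HY : is_submodule Y.
  split; first by rewrite /Y scaler0.
  - by move=> u v; rewrite /Y scalerDr => -> ->; rewrite addr0.
  - by move=> a u; rewrite /Y (scZ fa) => ->; rewrite scaler0.
have Xn : exists u, X u /\ u <> 0.
  by exists (phi r ^+ N *: y); split => //; exists 1; rewrite mulr1.
have [w [[a Ew] Yw w0]] := uniform Iii HX HY Xn (ex_intro _ y0 (conj ry0 y0n)).
apply: w0; rewrite Ew; apply: (HN N.+1) => //.
by rewrite /L exprS -mulrA -scalerA -Ew.
Qed.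

Lemma expr_inj (R : comNzRingType) (A : nzRingType) (phi : {rmorphism R -> A}) (J : lmodType A) r :
  (forall y : J, phi r *: y = 0 -> y = 0) -> forall N (y : J), phi r ^+ N *: y = 0 -> y = 0.
Proof.
move=> rinj; elim=> [|N IH] y; first by rewrite expr0 scale1r.
by rewrite exprS -scalerA => /rinj /IH.
Qed.

Unset Implicit Arguments.

Theorem lemma3p14 (R : comNzRingType) (A : nzRingType) (phi : {rmorphism R -> A})
  (I J : lmodType A) (P Q : A -> Prop) :
  noetherian_ring R -> finite_algebra phi ->
  indecomposable_injective I -> indecomposable_injective J ->
  is_prime_ideal P -> hull_is_power P I ->
  is_prime_ideal Q -> hull_is_power Q J ->
  (exists f : I -> J, is_linear_map f /\ exists x, f x <> 0) ->
  ~ (forall r : R, P (phi r) <-> Q (phi r)) ->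
  ~ Hom_noetherian_over_End I J.
Proof.
move=> Rn fa Iii Jii HP hP HQ hQ [f [fl [x1 fx1]]] nPQ Hnoeth.
have [r Hr] : exists r, ~ (P (phi r) <-> Q (phi r)).
  apply: byc => H; apply: nPQ => r; apply: byc => H'; apply: H; by exists r.
case: (pselect (P (phi r))) => Pr; case: (pselect (Q (phi r))) => Qr;
  try by (apply: Hr; tauto).
- (* r in P \ Q *)
  have [N HN] := loc_nil Rn fa Iii (hull_tors HP hP Pr) x1.
  apply: fx1; apply: (@expr_inj _ _ _ _ _ (hull_inj fa HQ hQ Qr) N).
  by rewrite -(linZ fl) HN (lin0 fl).
- (* r in Q \ P *)
  have [h [hl hs sh]] := bij fa Iii (hull_inj fa HP hP Pr).
  have [y0 [y0n ry0]] := hull_tors HQ hQ Qr.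
  pose g := fun n x => f (iter n h x).
  have gl : forall n, is_linear_map (g n).
    by move=> n; apply: lin_comp => //; apply: lin_iter.
  have gS : forall n x, phi r *: g n.+1 x = g n x.
    by move=> n x; rewrite /g -(linZ fl) iterS sh.
  pose c := fun n (k : I -> J) => is_linear_map k /\
     exists e, is_linear_map e /\ forall x, k x = e (g n x).
  have cE : forall n, is_End_submodule (c n).
    move=> n; split.
    - by move=> k [].
    - split; first exact: lin_zero.
      by exists (fun _ => 0); split; [exact: lin_zero|].
    - move=> k1 k2 [k1l [e1 [e1l E1]]] [k2l [e2 [e2l E2]]]; split; first exact: lin_add.
      exists (fun z => e1 z + e2 z); split; first exact: lin_add.
      by move=> x; rewrite E1 E2.
    - move=> e k el [kl [e1 [e1l E1]]]; split; first exact: lin_comp.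
      exists (fun z => e (e1 z)); split; first exact: lin_comp.
      by move=> x; rewrite E1.
  have casc : forall n k, c n k -> c n.+1 k.
    move=> n k [kl [e [el E]]]; split => //.
    exists (fun z => e (phi r *: z)); split.
      by apply: lin_comp => //; apply: sc_lin.
    by move=> x; rewrite gS.
  have [N HN] := Hnoeth c cE casc.
  have cN1 : c N.+1 (g N.+1) by split => //; exists id; split => //; exact: lin_id.
  have [_ [e [el E]]] := HN N.+1 (leqnSn N) _ cN1.
  pose k := fun z => e (phi r *: z).
  have kl : is_linear_map k by apply: lin_comp => //; apply: sc_lin.
  pose x' := iter N.+1 (fun z => phi r *: z) x1.
  have hx : forall n x, iter n h (iter n (fun z => phi r *: z) x) = x.
    by elim=> [|n IH] x //; rewrite iterSr iterS hs.
  have gx : g N.+1 x' = f x1 by rewrite /g /x' hx.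
  pose U := fun z => k z = z.
  pose V := fun z => k z = 0.
  have HU : is_submodule U.
    split; first by rewrite /U (lin0 kl).
    - by move=> u v; rewrite /U (linD kl) => -> ->.
    - by move=> a u; rewrite /U (linZ kl) => ->.
  have HV : is_submodule V.
    split; first by rewrite /V (lin0 kl).
    - by move=> u v; rewrite /V (linD kl) => -> ->; rewrite addr0.
    - by move=> a u; rewrite /V (linZ kl) => ->; rewrite scaler0.
  have Uz : U (g N.+1 x') by rewrite /U /k gS -E.
  have Vy : V y0 by rewrite /V /k ry0 (lin0 el).
  have Un : exists u, U u /\ u <> 0 by exists (g N.+1 x'); split => //; rewrite gx.
  have [w [Uw Vw w0]] := uniform Jii HU HV Un (ex_intro _ _ (conj Vy y0n)).
  by apply: w0; rewrite -Uw.
Qed.
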